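(* Let $\epsilon\in(0,1)$, $u_0\in\mathbb{R}\setminus\{0,1,-1\}$, and let $h^*=\frac{\epsilon^2}{u_0^2+|u_0|}$ if $|u_0|>1$ and $h^*=\frac{\epsilon^2}{2}$ if $0<|u_0|<1$. For every $h\in(0,h^*]$, the sequence $(u_n)_{n\ge0}$ generated by the explicit Euler scheme $$\frac{u_n-u_{n-1}}{h}+\frac{1}{\epsilon^2}\big(u_{n-1}^3-u_{n-1}\big)=0,\qquad n\ge 1,$$ satisfies $E(u_n)\le E(u_{n-1})$ for all $n\ge1$, where $E(v)=\frac{1}{4\epsilon^2}(v^2-1)^2$.
   Context: The scheme discretizes the ODE $u'(t)+\frac{1}{\epsilon^2}(u^3-u)=0$, $u(0)=u_0$, whose energy is $E(u)=\frac{1}{\epsilon^2}F(u)$ with $F(u)=\frac14(u^2-1)^2$. *)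

(* Defs.v *)
From Stdlib Require Import Reals.
Open Scope R_scope.

Definition F (u : R) : R := / 4 * (u ^ 2 - 1) ^ 2.
Definition energy (eps u : R) : R := / eps ^ 2 * F u.

Fixpoint euler (eps h u0 : R) (n : nat) : R :=
  match n with
  | O => u0
  | S m => let v := euler eps h u0 m in v - h / eps ^ 2 * (v ^ 3 - v)
  end.

Definition hstar (eps u0 : R) : R :=
  if Rlt_dec 1 (Rabs u0) then eps ^ 2 / (u0 ^ 2 + Rabs u0) else eps ^ 2 / 2.

(* Main.v *)
Require Import Defs.
From Stdlib Require Import Reals Lra Psatz.
Open Scope R_scope.

Lemma step_eq (eps h u0 : R) (m : nat) :
  euler eps h u0 (S m) =
  euler eps h u0 m * (1 - h / eps ^ 2 * (euler eps h u0 m ^ 2 - 1)).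
Proof. simpl. ring. Qed.

Lemma abs_sq (x : R) : x ^ 2 = Rabs x ^ 2.
Proof. rewrite <- (pow2_abs x). reflexivity. Qed.

Lemma energy_le (eps x y : R) : 0 < eps ->
  (x ^ 2 - 1) ^ 2 <= (y ^ 2 - 1) ^ 2 -> energy eps x <= energy eps y.
Proof.
  intros He H. unfold energy, F.
  apply Rmult_le_compat_l. left; apply Rinv_0_lt_compat; apply pow_lt; lra.
  apply Rmult_le_compat_l; lra.
Qed.

Lemma sq_mono (a b : R) : 0 <= b ^ 2 - 1 <= a ^ 2 - 1 -> (b ^ 2 - 1) ^ 2 <= (a ^ 2 - 1) ^ 2.
Proof. intros [H1 H2]. simpl. rewrite !Rmult_1_r. apply Rmult_le_compat; lra. Qed.

Lemma sq_mono2 (a b : R) : a ^ 2 - 1 <= b ^ 2 - 1 <= 0 -> (b ^ 2 - 1) ^ 2 <= (a ^ 2 - 1) ^ 2.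
Proof. intros H. replace ((b^2-1)^2) with ((1-b^2)^2) by ring.
  replace ((a^2-1)^2) with ((1-a^2)^2) by ring.
  simpl. rewrite !Rmult_1_r. apply Rmult_le_compat; lra. Qed.

Theorem theorem2p3 (eps u0 h : R) :
  0 < eps < 1 ->
  u0 <> 0 -> u0 <> 1 -> u0 <> -1 ->
  0 < h <= hstar eps u0 ->
  forall n : nat, (1 <= n)%nat ->
    energy eps (euler eps h u0 n) <= energy eps (euler eps h u0 (n - 1)).
Proof.
  intros He H0 H1 H2 [Hh Hhs] n Hn.
  destruct n as [|m]; [lia|].
  replace (S m - 1)%nat with m by lia.
  set (k := h / eps ^ 2).
  assert (He2 : 0 < eps ^ 2) by (apply pow_lt; lra).
  assert (Hk : 0 < k) by (unfold k; apply Rdiv_lt_0_compat; lra).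
  apply energy_le; [lra|].
  rewrite (abs_sq (euler eps h u0 (S m))), (abs_sq (euler eps h u0 m)).
  unfold hstar in Hhs. set (M := Rabs u0) in *.
  destruct (Rlt_dec 1 M) as [HM|HM].
  - assert (HD : 0 < u0 ^ 2 + M) by (pose proof (pow2_ge_0 u0); lra).
    assert (Hk1 : k * (M ^ 2 + M) <= 1).
    { rewrite (abs_sq u0) in Hhs, HD. fold M in Hhs, HD.
      unfold k. apply Rmult_le_compat_r with (r := (M^2+M)/eps^2) in Hhs;
      [| unfold Rdiv; apply Rmult_le_pos; [lra | left; apply Rinv_0_lt_compat; lra]].
      replace (h / eps ^ 2 * (M ^ 2 + M)) with (h * ((M ^ 2 + M) / eps ^ 2)) by (field; lra).
      replace (eps ^ 2 / (M ^ 2 + M) * ((M ^ 2 + M) / eps ^ 2)) with 1 in Hhs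
        by (field; lra). exact Hhs. }
    assert (Inv : forall j, 1 <= Rabs (euler eps h u0 j) <= M).
    { induction j as [|j IH].
      - simpl. fold M. lra.
      - rewrite step_eq, Rabs_mult. fold k.
        set (a := Rabs (euler eps h u0 j)) in *.
        rewrite (abs_sq (euler eps h u0 j)). fold a.
        assert (Hc : 0 <= 1 - k * (a ^ 2 - 1)) by nra.
        rewrite (Rabs_pos_eq _ Hc).
        assert (k * (a * (a + 1)) <= 1) by nra.
        assert (0 <= (a - 1) * (1 - k * (a * (a + 1)))) by (apply Rmult_le_pos; lra).
        assert (0 <= k * (a * (a ^ 2 - 1))).
        { apply Rmult_le_pos; [lra|]. apply Rmult_le_pos; nra. }
        split; nra. }
    pose proof (Inv m) as Im.
    rewrite step_eq, Rabs_mult. fold k.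
    set (a := Rabs (euler eps h u0 m)) in *.
    rewrite (abs_sq (euler eps h u0 m)). fold a.
    assert (Hc : 0 <= 1 - k * (a ^ 2 - 1)) by nra.
    rewrite (Rabs_pos_eq _ Hc).
    assert (k * (a * (a + 1)) <= 1) by nra.
    assert (0 <= (a - 1) * (1 - k * (a * (a + 1)))) by (apply Rmult_le_pos; lra).
    assert (0 <= k * (a * (a ^ 2 - 1))).
    { apply Rmult_le_pos; [lra|]. apply Rmult_le_pos; nra. }
    assert (1 <= a * (1 - k * (a ^ 2 - 1)) <= a) by (split; nra).
    apply sq_mono. split; nra.
  - assert (Hk1 : k <= / 2).
    { unfold k. apply Rmult_le_compat_r with (r := / eps^2) in Hhs;
      [| left; apply Rinv_0_lt_compat; lra].
      replace (eps ^ 2 / 2 * / eps ^ 2) with (/2) in Hhs by (field; lra).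
      exact Hhs. }
    assert (Inv : forall j, Rabs (euler eps h u0 j) <= 1).
    { induction j as [|j IH].
      - simpl. fold M. lra.
      - rewrite step_eq, Rabs_mult. fold k.
        set (a := Rabs (euler eps h u0 j)) in *.
        rewrite (abs_sq (euler eps h u0 j)). fold a.
        assert (Ha : 0 <= a) by apply Rabs_pos.
        assert (Hc : 0 <= 1 - k * (a ^ 2 - 1)) by nra.
        rewrite (Rabs_pos_eq _ Hc).
        assert (k * (a * (a + 1)) <= 1) by nra.
        nra. }
    pose proof (Inv m) as Im.
    rewrite step_eq, Rabs_mult. fold k.
    set (a := Rabs (euler eps h u0 m)) in *.
    rewrite (abs_sq (euler eps h u0 m)). fold a.
    assert (Ha : 0 <= a) by apply Rabs_pos.
    assert (Hc : 0 <= 1 - k * (a ^ 2 - 1)) by nra.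
    rewrite (Rabs_pos_eq _ Hc).
    assert (k * (a * (a + 1)) <= 1) by nra.
    assert (0 <= (1 - a) * (1 - k * (a * (a + 1)))) by (apply Rmult_le_pos; lra).
    assert (0 <= k * (a * (1 - a ^ 2))).
    { apply Rmult_le_pos; [lra|]. apply Rmult_le_pos; nra. }
    assert (a <= a * (1 - k * (a ^ 2 - 1)) <= 1) by (split; nra).
    apply sq_mono2. split; nra.
Qed.
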